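(* Let $G$ be a factor graph, $f_i$ an unknown factor of $G$, $C_{f_i}$ the set of known factors of $G$ that are possibly identical to $f_i$, and $C^{\ell}_{f_i}$ a maximal subset of $C_{f_i}$ such that $f_j\approx f_k$ for all $f_j,f_k\in C^{\ell}_{f_i}$. If $|C^{\ell}_{f_i}|/|C_{f_i}|>0.5$, then $C^{\ell}_{f_i}$ is unique, i.e. there is no other maximal subset $C^{\ell'}_{f_i}\ne C^{\ell}_{f_i}$ of $C_{f_i}$ with $|C^{\ell'}_{f_i}|=|C^{\ell}_{f_i}|$ whose elements are pairwise possibly identical.
   Context: A factor graph (FG) is an undirected bipartite graph with random variables (each with a finite range) and factors; each factor $f_j$ defines a function $\phi_j(\mathcal R_j)$ mapping assignments of a sequence $\mathcal R_j$ of random variables to positive reals (potentials), and a random variable is adjacent to $f_j$ iff it occurs in $\mathcal R_j$. A factor is \emph{unknown} if its potential values are unknown, otherwise known. Evidence is a set of observed events. $\mathrm{Ne}_G(v)$ is the neighbour set of node $v$. For factors $f_i,f_j$, their 2-step neighbourhoods are \emph{indistinguishable} if $|\mathrm{Ne}_G(f_i)|=|\mathrm{Ne}_G(f_j)|$ and there is a bijection $\tau:\mathrm{Ne}_G(f_i)\to\mathrm{Ne}_G(f_j)$ such that each $R_k$ and $\tau(R_k)$ have identical observed evidence, identical ranges, and the same number of neighbouring factors. Factors $f_i,f_j$ are \emph{possibly identical}, written $f_i\approx f_j$, if their 2-step neighbourhoods are indistinguishable and at least one of them is unknown or both encode identical potential mappings. Here ''maximal subset'' refers to a subset of largest cardinality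 among subsets of $C_{f_i}$ with pairwise possibly identical elements. *)

(* Defs.v *)
From HB Require Import structures.
From mathcomp Require Import all_boot all_order all_algebra.
From mathcomp Require Import boolp.
Set Implicit Arguments. Unset Strict Implicit. Unset Printing Implicit Defensive.
Import Order.TTheory GRing.Theory Num.Theory.

(* Evidence observed on a random
   variable is an element of Ev (e.g. [None] = unobserved).  A factor f has
   an argument sequence [fg_args f] (the sequence R_f) and a potential that
   is either unknown ([None]) or a known mapping from assignments to
   positive reals. *)
Record factor_graph (V F D : finType) (Ev : eqType) (R : realFieldType) := {
  fg_range : V -> {set D};
  fg_args : F -> seq V;
  fg_evidence : V -> Ev;
  fg_pot : F -> option (seq D -> R);
  fg_pot_pos : forall f p a, fg_pot f = Some p -> (0 < p a)%R
}.

Section FG.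
Variables (V F D : finType) (Ev : eqType) (R : realFieldType).
Variable G : factor_graph V F D Ev R.

Definition NeF (f : F) : {set V} := [set v | v \in fg_args G f].
Definition NeV (v : V) : {set F} := [set f | v \in fg_args G f].

Definition unknown (f : F) : bool := fg_pot G f == None.
Definition known (f : F) : bool := ~~ unknown f.

Definition indistinguishable (fi fj : F) : Prop :=
  #|NeF fi| = #|NeF fj| /\
  exists tau : V -> V,
    [/\ {in NeF fi &, injective tau},
        tau @: NeF fi = NeF fj &
        forall Rk, Rk \in NeF fi ->
          [/\ fg_evidence G (tau Rk) = fg_evidence G Rk,
              fg_range G (tau Rk) = fg_range G Rk &
              #|NeV (tau Rk)| = #|NeV Rk| ]].

Definition identical_potentials (fi fj : F) : Prop :=
  exists p q, [/\ fg_pot G fi = Some p, fg_pot G fj = Some q &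
                  forall a, p a = q a].

Definition possibly_identical (fi fj : F) : Prop :=
  indistinguishable fi fj /\
  (unknown fi \/ unknown fj \/ identical_potentials fi fj).

Definition candidates (fi : F) : {set F} :=
  [set fj | known fj & `[< possibly_identical fi fj >]].

Definition pairwise_possibly_identical (S : {set F}) : Prop :=
  forall fj fk, fj \in S -> fk \in S -> possibly_identical fj fk.

Definition maximal_subset (fi : F) (S : {set F}) : Prop :=
  [/\ S \subset candidates fi, pairwise_possibly_identical S &
      forall S' : {set F}, S' \subset candidates fi ->
        pairwise_possibly_identical S' ->
        #|S'| <= #|S| ]%N.

End FG.

(* Main.v *)
Require Import Defs.
From HB Require Import structures.
From mathcomp Require Import all_boot all_order all_algebra.
From mathcomp Require Import boolp.
From mathcomp Require Import lra zify.
Import Order.TTheory GRing.Theory Num.Theory.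

Lemma indist_trans (V F D : finType) (Ev : eqType) (R : realFieldType)
  (G : factor_graph V F D Ev R) a b c :
  indistinguishable G a b -> indistinguishable G b c -> indistinguishable G a c.
Proof.
move=> [h1 [t1 [i1 e1 p1]]] [h2 [t2 [i2 e2 p2]]]; split; first by rewrite h1.
have m1 : forall x, x \in NeF G a -> t1 x \in NeF G b.
  by move=> x xa; rewrite -e1; apply: imset_f.
exists (t2 \o t1); split.
- move=> x y xa ya /= E; apply: i1 => //; apply: i2 => //; exact: m1.
- by rewrite imset_comp e1 e2.
- move=> x xa /=; have [q1 q2 q3] := p1 x xa; have [r1 r2 r3] := p2 _ (m1 x xa).
  by split; [rewrite r1 q1|rewrite r2 q2|rewrite r3 q3].
Qed.

Lemma pi_trans (V F D : finType) (Ev : eqType) (R : realFieldType)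
  (G : factor_graph V F D Ev R) a b c :
  known G a -> known G b -> known G c ->
  possibly_identical G a b -> possibly_identical G b c -> possibly_identical G a c.
Proof.
rewrite /known => ka kb kc [i1 o1] [i2 o2]; split; first exact: indist_trans i1 i2.
right; right.
case: o1 => [u|[u|[p [q [pa qb pq]]]]]; first by rewrite u in ka.
  by rewrite u in kb.
case: o2 => [u|[u|[p' [q' [pb qc pq']]]]]; first by rewrite u in kb.
  by rewrite u in kc.
exists p, q'; split => // x; rewrite pq; have : Some q = Some p' by rewrite -qb -pb.
case=> ->; exact: pq'.
Qed.

Theorem mainTheorem2 (V F D : finType) (Ev : eqType) (R : realFieldType)
  (G : factor_graph V F D Ev R) (fi : F) (Cl : {set F}) :
  unknown G fi ->
  maximal_subset G fi Cl ->
  (1 / 2 < (#|Cl|%:R / #|candidates G fi|%:R : rat))%R ->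
  forall Cl' : {set F},
    Cl' \subset candidates G fi ->
    pairwise_possibly_identical G Cl' ->
    #|Cl'| = #|Cl| ->
    Cl' = Cl.
Proof.
move=> _ [sC pC mC] hr Cl' sC' pC' eC.
set C := candidates G fi in sC sC' mC hr *.
have kn : forall x, x \in C -> known G x by move=> x; rewrite inE => /andP[].
have h2 : (#|C| < 2 * #|Cl|)%N.
  have cpos : (0 < #|C|)%N.
    rewrite lt0n; apply/negP => /eqP c0; move: hr; rewrite c0 invr0 mulr0.
    by rewrite ltNge divr_ge0.
  have cpos' : (0 < #|C|%:R :> rat)%R by rewrite ltr0n.
  move: hr; rewrite ltr_pdivlMr // => hr.
  have : (#|C|%:R < 2 * #|Cl|%:R :> rat)%R by lra.
  by rewrite -natrM ltr_nat.
have [y yI] : exists y, y \in Cl :&: Cl'.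
  apply/set0Pn; rewrite -card_gt0.
  have := cardsU Cl Cl'.
  have : (#|Cl :|: Cl'| <= #|C|)%N by apply: subset_leq_card; rewrite subUset sC.
  lia.
move: yI; rewrite inE => /andP[yCl yCl'].
have sub : Cl' \subset Cl.
  apply/subsetP => x xCl'; apply/negPn/negP => xn.
  have xC : x \in C by apply: (subsetP sC').
  have := mC (x |: Cl).
  rewrite cardsU1 xn subUset sub1set xC sC => /(_ isT).
  have -> : forall n, (1 + n <= n)%N = false by move=> n; lia.
  move=> H; apply: notF; apply: H => a b.
  have kCl : forall z, z \in Cl -> known G z by move=> z zl; apply: kn; apply: (subsetP sC).
  have xy : possibly_identical G x y by apply: pC'.
  have yx : possibly_identical G y x by apply: pC'.
  have xx : possibly_identical G x x by apply: pC'.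
  rewrite !inE => /orP[/eqP->|aCl] /orP[/eqP->|bCl] //.
  - apply: pi_trans (kn _ xC) (kCl _ yCl) (kCl _ bCl) xy (pC _ _ yCl bCl).
  - apply: pi_trans (kCl _ aCl) (kCl _ yCl) (kn _ xC) (pC _ _ aCl yCl) yx.
  - exact: pC.
apply/eqP; rewrite eqEcard sub eC /=; exact: leqnn.
Qed.
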